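(* Let $f_1,\dots,f_m\in\mathbb{R}[x_1,\dots,x_n]$ and $\sigma=(\sigma_1,\dots,\sigma_m)\in\{\le,<,=,>,\ge\}^m$, and set $E_\sigma=\{i:\sigma_i\text{ is }``=''\}$. Then for every connected component $C$ of $\{x\in\mathbb{R}^n:f_1(x)\sigma_10,\dots,f_m(x)\sigma_m0\}$, $$Z(C)\subset\bigcup_{E_\sigma\subset S\subset\{1,\dots,m\},\ S\ne\emptyset}\pi_x(W_S).$$
   Context: For nonempty $A\subset\mathbb{R}^n$ with closure $\overline A$ and $\pi_1$ the first coordinate projection: $Z_{\inf}(A)=\{x\in\overline A:x_1=\inf\pi_1(A)\}$ if $\pi_1(A)$ is bounded below (else $\emptyset$), $Z_{\sup}(A)=\{x\in\overline A:x_1=\sup\pi_1(A)\}$ if $\pi_1(A)$ is bounded above (else $\emptyset$), $Z(A)=Z_{\inf}(A)\cup Z_{\sup}(A)$. For $S=\{i_1,\dots,i_s\}\subset\{1,\dots,m\}$: if $s=1$, $W_S=\{z\in\mathbb{C}^n: f_{i_1}(z)=\frac{\partial f_{i_1}}{\partial x_2}(z)=\dots=\frac{\partial f_{i_1}}{\partial x_n}(z)=0\}$; if $2\le s\le n-1$, $W_S\subset\mathbb{C}^n\times\mathbb{P}^{s-1}$ is the set of $(z,(\mu_1:\dots:\mu_s))$ with $f_{i_1}(z)=\dots=f_{i_s}(z)=0$ and $\sum_{j=1}^s\mu_j\frac{\partial f_{i_j}}{\partial x_k}(z)=0$ for $k=2,\dots,n$; if $s\ge n$, $W_S=\{z\in\mathbb{C}^n:f_{i_1}(z)=\dots=f_{i_s}(z)=0\}$.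 $\pi_x$ denotes the projection onto the $x$-coordinates (the identity when $W_S\subset\mathbb{C}^n$), and $\mathbb{R}^n$ is viewed inside $\mathbb{C}^n$. *)

(* Defs.v *)
From HB Require Import structures.
From mathcomp Require Import all_boot all_order all_algebra.
From mathcomp Require Import all_classical all_reals all_analysis.
From mathcomp Require Import complex.
From mathcomp Require mpoly.

Set Implicit Arguments.
Unset Strict Implicit.
Unset Printing Implicit Defensive.

Import Order.TTheory GRing.Theory Num.Theory.
Import numFieldNormedType.Exports.
Local Open Scope classical_set_scope.
Local Open Scope ring_scope.

Inductive sign_rel := sLe | sLt | sEq | sGt | sGe.

Section Defs.
Variable R : realType.

Definition sign_holds (s : sign_rel) (a : R) : bool :=
  match s with
  | sLe => a <= 0
  | sLt => a < 0
  | sEq => a == 0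
  | sGt => a > 0
  | sGe => a >= 0
  end.

(* Points of R^n are row vectors 'rV[R]_n (product = Euclidean topology);
   the coordinate x_{j+1} is x ord0 j. *)

Definition semialg_set (n m : nat) (f : 'I_m -> mpoly.mpoly n R)
  (sigma : 'I_m -> sign_rel) : set 'rV[R]_n :=
  [set x | forall i : 'I_m,
      sign_holds (sigma i) (mpoly.meval (fun j => x ord0 j) (f i))].

Definition Eset (m : nat) (sigma : 'I_m -> sign_rel) : {set 'I_m} :=
  [set i | if sigma i is sEq then true else false].

Definition is_connected_component (T : topologicalType) (X C : set T) : Prop :=
  exists2 x, X x & C = connected_component X x.

Definition pi1 (n : nat) (x : 'rV[R]_n.+1) : R := x ord0 ord0.

Definition Zinf (n : nat) (A : set 'rV[R]_n.+1) : set 'rV[R]_n.+1 :=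
  [set x | has_lbound (@pi1 n @` A) /\ closure A x /\ @pi1 n x = inf (@pi1 n @` A)].

Definition Zsup (n : nat) (A : set 'rV[R]_n.+1) : set 'rV[R]_n.+1 :=
  [set x | has_ubound (@pi1 n @` A) /\ closure A x /\ @pi1 n x = sup (@pi1 n @` A)].

Definition Zset (n : nat) (A : set 'rV[R]_n.+1) : set 'rV[R]_n.+1 :=
  Zinf A `|` Zsup A.

Definition cev (N : nat) (z : 'I_N -> R[i]) (p : mpoly.mpoly N R) : R[i] :=
  mpoly.mmap (real_complex R) z p.

(* pi_x(W_S) for S a subset of {1..m}, with N = n.+1 variables
   (x_1 = index ord0, x_2..x_N = the indices k != ord0), s = #|S|.
   For 2 <= s <= N-1, W_S lives in C^N x P^{s-1}; a point of P^{s-1}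
   is represented by a nonzero family (mu_i)_{i in S} of complex numbers,
   and pi_x(W_S) is the set of z for which such a mu exists. *)
Definition piW (n m : nat) (f : 'I_m -> mpoly.mpoly n.+1 R) (S : {set 'I_m})
  (z : 'I_n.+1 -> R[i]) : Prop :=
  if #|S| == 1%N then
    forall i, i \in S ->
      cev z (f i) = 0 /\
      forall k : 'I_n.+1, k != ord0 -> cev z (mpoly.mderiv k (f i)) = 0
  else if (2 <= #|S| <= n)%N then
    (forall i, i \in S -> cev z (f i) = 0) /\
    exists mu : 'I_m -> R[i],
      (exists2 i, i \in S & mu i != 0) /\
      forall k : 'I_n.+1, k != ord0 ->
        \sum_(i in S) mu i * cev z (mpoly.mderiv k (f i)) = 0
  else if (n.+1 <= #|S|)%N then
    forall i, i \in S -> cev z (f i) = 0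
  else False.

Definition realC (n : nat) (x : 'rV[R]_n) : 'I_n -> R[i] :=
  fun j => real_complex R (x ord0 j).

End Defs.

(* Main.v *)
Require Import Defs.
From HB Require Import structures.
From mathcomp Require Import all_boot all_order all_algebra.
From mathcomp Require Import mpoly.
From mathcomp Require Import all_classical all_reals all_analysis.
From mathcomp Require Import complex.
From mathcomp Require Import ring lra.

Import numFieldNormedType.Exports.
Local Open Scope classical_set_scope.
Local Open Scope ring_scope.
Set Implicit Arguments.
Unset Strict Implicit.
Unset Printing Implicit Defensive.
Import Order.TTheory GRing.Theory Num.Theory.
Section Norms.
Variable R : realType.

Lemma mxnorm_entry (p q : nat) (M : 'M[R]_(p,q)) i j : `|M i j| <= `|M|.
Proof.
by rewrite [leRHS]/Num.Def.normr /= mx_normrE; apply/bigmax_geP; right => /=; exists (i, j).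
Qed.

Lemma mxnorm_leP (p q : nat) (M : 'M[R]_(p,q)) b :
  0 <= b -> (forall i j, `|M i j| <= b) -> `|M| <= b.
Proof.
move=> b0 H; rewrite [leLHS]/Num.Def.normr /= mx_normrE.
by apply: bigmax_le => // -[i j] _; exact: H.
Qed.

Lemma mulmx_bound (p q r : nat) (M : 'M[R]_(q,r)) :
  exists2 K, 0 < K & forall v : 'M[R]_(p,q), `|v *m M| <= K * `|v|.
Proof.
exists (1 + \sum_j \sum_k `|M j k|).
  by rewrite ltr_wpDr // sumr_ge0 // => j _; rewrite sumr_ge0.
move=> v; apply: mxnorm_leP; first by rewrite mulr_ge0 // addr_ge0 // sumr_ge0 // => j _; rewrite sumr_ge0.
move=> i k; rewrite mxE.
apply: le_trans (ler_norm_sum _ _ _) _.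
apply: le_trans (_ : \sum_j `|v| * `|M j k| <= _).
  by apply: ler_sum => j _; rewrite normrM ler_wpM2r // mxnorm_entry.
rewrite -mulr_sumr mulrC ler_wpM2r //.
apply: le_trans (_ : \sum_j \sum_k0 `|M j k0| <= _); last by rewrite lerDr.
by apply: ler_sum => j _; rewrite (bigD1 k) //= lerDl sumr_ge0.
Qed.

End Norms.

Section SDsec.
Variables (R : realType) (N : nat).

Definition dotv (g h : 'rV[R]_N) := \sum_k g ord0 k * h ord0 k.
Definition nsum (g : 'rV[R]_N) := \sum_k `|g ord0 k|.

Lemma nsum_ge0 g : 0 <= nsum g.
Proof. by rewrite sumr_ge0. Qed.

Lemma dotv_bound g h : `|dotv g h| <= nsum g * `|h|.
Proof.
apply: le_trans (ler_norm_sum _ _ _) _; rewrite /nsum mulr_suml.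
by apply: ler_sum => k _; rewrite normrM ler_wpM2l // mxnorm_entry.
Qed.

Lemma dotvD g h1 h2 : dotv g (h1 + h2) = dotv g h1 + dotv g h2.
Proof. by rewrite /dotv -big_split; apply: eq_bigr => k _; rewrite mxE mulrDr. Qed.

Lemma dotvN g h : dotv g (- h) = - dotv g h.
Proof. by rewrite /dotv -sumrN; apply: eq_bigr => k _; rewrite mxE mulrN. Qed.

Lemma dotvB g h1 h2 : dotv g (h1 - h2) = dotv g h1 - dotv g h2.
Proof. by rewrite dotvD dotvN. Qed.

Lemma dotvZ g a h : dotv g (a *: h) = a * dotv g h.
Proof. by rewrite /dotv mulr_sumr; apply: eq_bigr => k _; rewrite mxE mulrCA. Qed.

Lemma dotvDl g1 g2 h : dotv (g1 + g2) h = dotv g1 h + dotv g2 h.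
Proof. by rewrite /dotv -big_split; apply: eq_bigr => k _; rewrite mxE mulrDl. Qed.

Lemma dotvZl a g h : dotv (a *: g) h = a * dotv g h.
Proof. by rewrite /dotv mulr_sumr; apply: eq_bigr => k _; rewrite mxE mulrA. Qed.

Lemma dotv0l h : dotv 0 h = 0.
Proof. by rewrite /dotv big1 // => k _; rewrite mxE mul0r. Qed.

Definition SD (x : 'rV[R]_N) (phi : 'rV[R]_N -> R) (g : 'rV[R]_N) :=
  forall e, 0 < e -> exists2 r, 0 < r & forall y y', `|y - x| < r -> `|y' - x| < r ->
    `|phi y - phi y' - dotv g (y - y')| <= e * `|y - y'|.

Lemma SD_cont x phi g : SD x phi g ->
  forall y, `|y - x| < 1 -> True.
Proof. by []. Qed.

Lemma SD_lip x phi g : SD x phi g ->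
  exists2 r, 0 < r & forall y y', `|y - x| < r -> `|y' - x| < r ->
    `|phi y - phi y'| <= (nsum g + 1) * `|y - y'|.
Proof.
move=> H; have [r r0 Hr] := H 1 ltr01; exists r => // y y' hy hy'.
have := Hr _ _ hy hy'; have := dotv_bound g (y - y').
set a := phi y - phi y'; set b := dotv g (y - y') => h1 h2.
have : `|a| <= `|a - b| + `|b|.
  by rewrite -{1}(subrK b a); apply: ler_normD.
lra.
Qed.

Lemma SD_ext x phi psi g h : (forall y, phi y = psi y) -> g = h ->
  SD x phi g -> SD x psi h.
Proof.
move=> E <- H e e0; have [r r0 Hr] := H e e0; exists r => // y y' hy hy'.
by rewrite -!E; apply: Hr.
Qed.

Lemma SD_const x c : SD x (fun=> c) 0.
Proof.
move=> e e0; exists 1 => // y y' _ _.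
by rewrite dotv0l !subrr normr0 mulr_ge0 // ltW.
Qed.

Lemma SD_coord x i : SD x (fun y => y ord0 i) (\row_k (k == i)%:R).
Proof.
move=> e e0; exists 1 => // y y' _ _.
have -> : dotv (\row_k (k == i)%:R) (y - y') = y ord0 i - y' ord0 i.
  rewrite /dotv (bigD1 i) //= big1 => [|k ki]; last by rewrite mxE (negbTE ki) mul0r.
  by rewrite !mxE eqxx mul1r addr0.
by rewrite subrr normr0 mulr_ge0 // ltW.
Qed.

Lemma SD_add x phi psi g h : SD x phi g -> SD x psi h ->
  SD x (fun y => phi y + psi y) (g + h).
Proof.
move=> Hp Hq e e0.
have e2 : 0 < e / 2 by rewrite divr_gt0.
have [r1 r10 H1] := Hp _ e2; have [r2 r20 H2] := Hq _ e2.
exists (Num.min r1 r2); first by rewrite lt_min r10 r20.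
move=> y y'; rewrite !lt_min => /andP[a1 a2] /andP[b1 b2].
have := H1 _ _ a1 b1; have := H2 _ _ a2 b2.
rewrite dotvDl.
set A := phi y - phi y' - dotv g (y - y'); set B := psi y - psi y' - dotv h (y - y').
have -> : phi y + psi y - (phi y' + psi y') - (dotv g (y - y') + dotv h (y - y')) = A + B.
  by rewrite /A /B; ring.
move=> hB hA; apply: le_trans (ler_normD _ _) _; lra.
Qed.

Lemma SD_scale x phi g c : SD x phi g -> SD x (fun y => c * phi y) (c *: g).
Proof.
move=> H e e0.
have e1 : 0 < e / (`|c| + 1) by rewrite divr_gt0 // ltr_wpDl.
have [r r0 Hr] := H _ e1; exists r => // y y' hy hy'.
have := Hr _ _ hy hy'; rewrite dotvZl.
have -> : c * phi y - c * phi y' - c * dotv g (y - y') = c * (phi y - phi y' - dotv g (y - y')) by ring.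
rewrite normrM => h.
have c0 : 0 <= `|c| by [].
have : `|c| * `|phi y - phi y' - dotv g (y - y')| <= `|c| * (e / (`|c| + 1) * `|y - y'|).
  by rewrite ler_wpM2l.
move=> h2; apply: le_trans h2 _.
have q : `|c| / (`|c| + 1) <= 1 by rewrite ler_pdivrMr ?ltr_wpDl // mul1r lerDl.
have -> : `|c| * (e / (`|c| + 1) * `|y - y'|) = (e * `|y - y'|) * (`|c| / (`|c| + 1)) by ring.
by rewrite -[leRHS]mulr1 ler_wpM2l // mulr_ge0 // ltW.
Qed.

End SDsec.

Section SDmul.
Variables (R : realType) (N : nat).

Lemma SD_mul (x : 'rV[R]_N) phi psi g h : SD x phi g -> SD x psi h ->
  SD x (fun y => phi y * psi y) (phi x *: h + psi x *: g).
Proof.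
move=> Hp Hq e e0.
have [rp rp0 Lp] := SD_lip Hp; have [rq rq0 Lq] := SD_lip Hq.
set Kp := nsum g + 1 in Lp; set Kq := nsum h + 1 in Lq.
have Kp0 : 0 < Kp by rewrite ltr_wpDl // nsum_ge0.
have Kq0 : 0 < Kq by rewrite ltr_wpDl // nsum_ge0.
have ng0 := nsum_ge0 g; have nh0 := nsum_ge0 h.
set P := `|phi x|; set Q := `|psi x|.
set M := P + 1 + (Q + 1) + Kp * nsum h + Kq * nsum g.
have M0 : 0 < M.
  rewrite /M; have : 0 <= P := normr_ge0 _; have : 0 <= Q := normr_ge0 _.
  have : 0 <= Kp * nsum h by rewrite mulr_ge0 // ltW.
  have : 0 <= Kq * nsum g by rewrite mulr_ge0 // ltW.
  lra.
set e1 := e / M.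
have e10 : 0 < e1 by rewrite divr_gt0.
have [r1 r10 H1] := Hp _ e10; have [r2 r20 H2] := Hq _ e10.
pose r := Num.min (Num.min (Num.min r1 r2) (Num.min rp rq))
             (Num.min (Num.min Kp^-1 Kq^-1) e1).
exists r.
  by rewrite !lt_min r10 r20 rp0 rq0 e10 !invr_gt0 Kp0 Kq0.
move=> y y'; rewrite !lt_min => /andP[/andP[/andP[y1 y2] /andP[yp yq]] /andP[/andP[yKp yKq] ye]].
move=> /andP[/andP[/andP[y'1 y'2] /andP[y'p y'q]] /andP[/andP[y'Kp y'Kq] y'e]].
have x0 : `|x - x| < rp by rewrite subrr normr0.
have x0' : `|x - x| < rq by rewrite subrr normr0.
have hA := H1 _ _ y1 y'1; have hB := H2 _ _ y2 y'2.
have lpy := Lp _ _ yp x0; have lqy' := Lq _ _ y'q x0'.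
set D := `|y - y'|.
set A := phi y - phi y' - dotv g (y - y').
set B := psi y - psi y' - dotv h (y - y').
have -> : phi y * psi y - phi y' * psi y' - dotv (phi x *: h + psi x *: g) (y - y')
   = phi y * B + (phi y - phi x) * dotv h (y - y') + psi y' * A
     + (psi y' - psi x) * dotv g (y - y').
  by rewrite dotvDl !dotvZl /A /B; ring.
have dh := dotv_bound h (y - y'); have dg := dotv_bound g (y - y').
have D0 : 0 <= D := normr_ge0 _.
have ey : `|y - x| <= e1 by apply: ltW.
have ey' : `|y' - x| <= e1 by apply: ltW.
have kpy : Kp * `|y - x| <= 1.
  by rewrite mulrC -ler_pdivlMr // mul1r ltW.
have kqy : Kq * `|y' - x| <= 1.
  by rewrite mulrC -ler_pdivlMr // mul1r ltW.
have P0 : 0 <= P := normr_ge0 _.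
have Q0 : 0 <= Q := normr_ge0 _.
have bpy : `|phi y| <= P + 1.
  have : `|phi y| <= `|phi y - phi x| + P.
    by rewrite -{1}(subrK (phi x) (phi y)); apply: ler_normD.
  lra.
have bqy : `|psi y'| <= Q + 1.
  have : `|psi y'| <= `|psi y' - psi x| + Q.
    by rewrite -{1}(subrK (psi x) (psi y')); apply: ler_normD.
  lra.
have lpy2 : `|phi y - phi x| <= Kp * e1 by apply: (le_trans lpy); rewrite ler_wpM2l // ltW.
have lqy2 : `|psi y' - psi x| <= Kq * e1 by apply: (le_trans lqy'); rewrite ler_wpM2l // ltW.
have t1 : `|phi y * B| <= (P + 1) * (e1 * D) by rewrite normrM ler_pM.
have t2 : `|(phi y - phi x) * dotv h (y - y')| <= (Kp * e1) * (nsum h * D) by rewrite normrM ler_pM.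
have t3 : `|psi y' * A| <= (Q + 1) * (e1 * D) by rewrite normrM ler_pM.
have t4 : `|(psi y' - psi x) * dotv g (y - y')| <= (Kq * e1) * (nsum g * D) by rewrite normrM ler_pM.
have eM : e = e1 * M by rewrite /e1 divfK // gt_eqF.
apply: le_trans (ler_normD _ _) _.
apply: le_trans (lerD (le_trans (ler_normD _ _) (lerD (ler_normD _ _) (lexx _))) (lexx _)) _.
have -> : e * D = (P + 1) * (e1 * D) + (Kp * e1) * (nsum h * D) + (Q + 1) * (e1 * D) + (Kq * e1) * (nsum g * D).
  by rewrite eM /M; ring.
lra.
Qed.
End SDmul.

Section SDpoly.
Variables (R : realType) (N : nat).

Definition pev (p : mpoly.mpoly N R) (y : 'rV[R]_N) := mpoly.meval (fun j => y ord0 j) p.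
Definition pgrad (p : mpoly.mpoly N R) (x : 'rV[R]_N) : 'rV[R]_N :=
  \row_k pev (mpoly.mderiv k p) x.

Lemma SD_poly (x : 'rV[R]_N) p : SD x (pev p) (pgrad p x).
Proof.
pose P q := SD x (pev q) (pgrad q x).
have PD p1 q : P p1 -> P q -> P (p1 + q).
  move=> Hp Hq; apply: SD_ext (SD_add Hp Hq).
    by move=> y; rewrite /pev mpoly.mevalD.
  by apply/rowP => k; rewrite !mxE /pev mpoly.mderivD mpoly.mevalD.
have PM p1 q : P p1 -> P q -> P (p1 * q).
  move=> Hp Hq; apply: SD_ext (SD_mul Hp Hq).
    by move=> y; rewrite /pev mpoly.mevalM.
  apply/rowP => k; rewrite !mxE /pev mpoly.mderivM mpoly.mevalD !mpoly.mevalM.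
  by rewrite addrC mulrC.
have PC c : P (mpoly.mpolyC N c).
  apply: SD_ext (SD_const x c).
    by move=> y; rewrite /pev mpoly.mevalC.
  by apply/rowP => k; rewrite !mxE /pev mpoly.mderivC mpoly.meval0.
have PX i : P (mpoly.mpolyX R (mpoly.mnm1 i)).
  apply: SD_ext (SD_coord x i).
    by move=> y; rewrite /pev mpoly.mevalXU.
  apply/rowP => k; rewrite !mxE /pev mpoly.mderivX mpoly.mevalZ mpoly.mnm1E eq_sym.
  case: eqP => [->|_]; last by rewrite mul0r.
  have -> : (U_(k) - U_(k))%MM = 0%MM by apply/mnmP => j; rewrite mnmBE subnn mnm0E.
  by rewrite mpoly.mpolyX0 mpoly.meval1 mulr1.
have PXm m : P (mpoly.mpolyX R m).
  rewrite mpoly.mpolyXE_id; apply: big_ind => //.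
    by rewrite -mpoly.mpolyC1; apply: PC.
  move=> i _; elim: (mpoly.fun_of_multinom m i) => [|k IH].
    by rewrite expr0 -mpoly.mpolyC1; apply: PC.
  by rewrite exprS; apply: PM.
elim/mpoly.mpolyind: p => [|c m p _ _ Hp].
  by rewrite -mpoly.mpolyC0; apply: PC.
by apply: PD => //; rewrite -mpoly.mul_mpolyC; apply: PM.
Qed.

End SDpoly.

Section Aux.
Variable R : realType.

Lemma fin_min (m : nat) (P : 'I_m -> R -> Prop) :
  (forall i r r', P i r -> 0 < r' -> r' <= r -> P i r') ->
  (forall i, exists2 r, 0 < r & P i r) -> exists2 r, 0 < r & forall i, P i r.
Proof.
move=> Pmon H.
have H' : forall i, exists r, 0 < r /\ P i r.
  by move=> i; have [r r0 Pr] := H i; exists r.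
have [rf Hrf] := choice H'.
have S0 : 0 <= \sum_i (rf i)^-1 by rewrite sumr_ge0 // => i _; rewrite invr_ge0 ltW //; case: (Hrf i).
have S1 : 0 < 1 + \sum_i (rf i)^-1 by rewrite ltr_wpDr.
exists (1 + \sum_i (rf i)^-1)^-1; first by rewrite invr_gt0.
move=> i; have [ri Pi] := Hrf i; apply: (Pmon _ _ _ Pi); first by rewrite invr_gt0.
rewrite -(invrK (rf i)) lef_pV2 ?posrE ?invr_gt0 //.
rewrite (bigD1 i) //=.
have : 0 <= \sum_(j < m | j != i) (rf j)^-1.
  by rewrite sumr_ge0 // => j _; rewrite invr_ge0 ltW //; case: (Hrf j).
lra.
Qed.

Lemma lip_cont (V : normedModType R) (f : R -> V) L :
  (forall t t', `|f t - f t'| <= L * `|t - t'|) -> continuous f.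
Proof.
move=> H t; apply/cvgrPdist_lt => e e0.
have L1 : 0 < `|L| + 1 by rewrite ltr_wpDl.
apply/nbhs_normP; exists (e / (`|L| + 1)); first by rewrite /= divr_gt0.
move=> y /= hy.
apply: le_lt_trans (H t y) _.
apply: le_lt_trans (ler_norm (L * `|t - y|)) _.
rewrite normrM normr_id.
have : `|L| * `|t - y| <= (`|L| + 1) * `|t - y| by rewrite ler_wpM2r // lerDl.
move=> h; apply: le_lt_trans h _.
by rewrite mulrC -ltr_pdivlMr.
Qed.

End Aux.

HB.instance Definition _ (R : realType) (m n : nat) := Complete.on 'M[R]_(m, n).

Section Path.
Variables (R : realType) (N m : nat).

Lemma dotv_mulmx (g : 'rV[R]_N) (h : 'rV[R]_m) (W : 'M[R]_(m, N)) :
  dotv g (h *m W) = \sum_j h ord0 j * dotv g (row j W).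
Proof.
rewrite /dotv; under eq_bigr do rewrite mxE mulr_sumr.
rewrite exchange_big /=; apply: eq_bigr => j _; rewrite mulr_sumr.
by apply: eq_bigr => k _; rewrite mxE mulrCA.
Qed.

Lemma PdiffE (c d : 'rV[R]_N) (W : 'M[R]_(m, N)) t (u u' : 'rV[R]_m) :
  (c + t *: d + u *m W) - (c + t *: d + u' *m W) = (u - u') *m W.
Proof. by rewrite mulmxBl opprD addrACA subrr add0r. Qed.

Lemma PdiffE2 (c d : 'rV[R]_N) (W : 'M[R]_(m, N)) t t' (u : 'rV[R]_m) :
  (c + t *: d + u *m W) - (c + t' *: d + u *m W) = (t - t') *: d.
Proof.
by rewrite opprD addrACA subrr addr0 opprD addrACA subrr add0r scalerBl.
Qed.

Lemma PdiffE3 (c d : 'rV[R]_N) (W : 'M[R]_(m, N)) a b (u u' : 'rV[R]_m) :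
  (c + a *: d + u *m W) - (c + b *: d + u' *m W) = (a - b) *: d + (u - u') *m W.
Proof.
rewrite scalerBl mulmxBl opprD addrACA; congr (_ + _).
by rewrite opprD addrACA subrr add0r.
Qed.

Lemma cllip (delta t t' : R) :
  `|Num.max 0 (Num.min t delta) - Num.max 0 (Num.min t' delta)| <= `|t - t'|.
Proof.
have n1 := ler_norm (t - t'); have n2 : -(t - t') <= `|t - t'| by rewrite -normrN ler_norm.
rewrite ler_norml !maxEle !minEle.
case: (leP t delta) => h1; case: (leP t' delta) => h2; case: (leP 0 t) => h3;
  case: (leP 0 t') => h4; case: (leP 0 delta) => h5; apply/andP; split; lra.
Qed.

Lemma clin (delta t : R) : 0 <= delta -> 0 <= Num.max 0 (Num.min t delta) <= delta.
Proof.
move=> d0; rewrite !maxEle !minEle.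
case: (leP t delta) => h1; case: (leP 0 t) => h3; case: (leP 0 delta) => h5; apply/andP; split; lra.
Qed.

Lemma clid (delta t : R) : 0 <= t <= delta -> Num.max 0 (Num.min t delta) = t.
Proof.
move=> /andP[h1 h2]; rewrite !maxEle !minEle.
by case: (leP t delta) => h3; case: (leP 0 t) => h4; lra.
Qed.

End Path.

Section Path2.
Variables (R : realType) (N m : nat).

Lemma path_lemma (x : 'rV[R]_N) (phi : 'I_m -> 'rV[R]_N -> R) (g : 'I_m -> 'rV[R]_N)
  (A : pred 'I_m) (W : 'M[R]_(m, N)) (d : 'rV[R]_N) (eps0 : R) :
  0 < eps0 ->
  (forall i, A i -> SD x (phi i) (g i)) ->
  \matrix_(j, i) (if A i then dotv (g i) (row j W) else (i == j)%:R) \in unitmx ->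
  exists2 rho, 0 < rho & exists2 delta, 0 < delta & forall c, `|c - x| < rho ->
    exists2 gam : R -> 'rV[R]_N, gam 0 = c &
      (exists L, forall t t', `|gam t - gam t'| <= L * `|t - t'|) /\
      forall t, 0 <= t <= delta ->
        [/\ `|gam t - x| < eps0, (forall i, A i -> phi i (gam t) = phi i c)
          & exists u : 'rV[R]_m, gam t = c + t *: d + u *m W].
Proof.
move=> eps00 HSD Junit.
set J := \matrix_(j, i) _ in Junit.
set Ji := invmx J.
have [KJ KJ0 HKJ] := @mulmx_bound R 1 m m Ji.
have [KW KW0 HKW] := @mulmx_bound R 1 m N W.
set Gs := \sum_i nsum (g i).
have Gs0 : 0 <= Gs by rewrite sumr_ge0 // => i _; exact: nsum_ge0.
have nG i : nsum (g i) <= Gs.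
  by rewrite /Gs (bigD1 i) //= lerDl sumr_ge0 // => j _; exact: nsum_ge0.
set e := (2 * KJ * KW)^-1.
have e0 : 0 < e by rewrite invr_gt0 !mulr_gt0.
have [r1 r10 Hr1] : exists2 r1, 0 < r1 & forall i, A i -> forall y y',
    `|y - x| < r1 -> `|y' - x| < r1 ->
    `|phi i y - phi i y' - dotv (g i) (y - y')| <= e * `|y - y'|.
  apply: fin_min.
    move=> i r r' Hr r'0 r'r Ai y y' hy hy'.
    by apply: Hr => //; apply: lt_le_trans r'r.
  move=> i; case Ai: (A i); last by exists 1.
  by have [r r0 Hr] := HSD i Ai e e0; exists r => // _.
set r := Num.min r1 eps0.
have r0 : 0 < r by rewrite lt_min r10 eps00.
have rr1 : r <= r1 by rewrite ge_min lexx.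
have reps : r <= eps0 by rewrite ge_min lexx orbT.
have Kbd i y y' : A i -> `|y - x| < r -> `|y' - x| < r ->
    `|phi i y - phi i y'| <= (Gs + e) * `|y - y'|.
  move=> Ai hy hy'.
  have := Hr1 i Ai y y' (lt_le_trans hy rr1) (lt_le_trans hy' rr1).
  have := dotv_bound (g i) (y - y'); have := nG i.
  have := normr_ge0 (y - y').
  set a := phi i y - phi i y'; set b := dotv (g i) (y - y') => h0 h1 h2 h3.
  have : `|a| <= `|a - b| + `|b| by rewrite -{1}(subrK b a); apply: ler_normD.
  have : nsum (g i) * `|y - y'| <= Gs * `|y - y'| by rewrite ler_wpM2r.
  lra.
set beta := r / (4 * KW).
have beta0 : 0 < beta by rewrite divr_gt0 // mulr_gt0.
have KWbeta : KW * beta = r / 4.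
  rewrite /beta; field; rewrite gt_eqF //.
set Kd := `|d| + 1.
have Kd0 : 0 < Kd by rewrite ltr_wpDl.
have dKd : `|d| <= Kd by rewrite lerDl.
set delta := Num.min (r / (4 * Kd)) (beta / (2 * KJ * (Gs + e) * Kd)).
have Ge0 : 0 < Gs + e by rewrite ltr_wpDl.
have delta0 : 0 < delta by rewrite lt_min !divr_gt0 // ?mulr_gt0.
have dd1 : delta * `|d| <= r / 4.
  apply: le_trans (_ : r / (4 * Kd) * Kd <= _).
    apply: ler_pM => //; [exact: ltW | by rewrite ge_min lexx].
  by rewrite invfM mulrA divfK ?gt_eqF.
have dd2 : KJ * ((Gs + e) * `|d| * delta) <= beta / 2.
  have h1 : (Gs + e) * `|d| * delta <= (Gs + e) * Kd * (beta / (2 * KJ * (Gs + e) * Kd)).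
    apply: ler_pM.
    - by rewrite mulr_ge0 // ltW.
    - exact: ltW delta0.
    - by rewrite ler_wpM2l // ltW.
    - by rewrite ge_min lexx orbT.
  have h2 : KJ * ((Gs + e) * Kd * (beta / (2 * KJ * (Gs + e) * Kd))) = beta / 2.
    field; rewrite !gt_eqF //.
  rewrite -h2 ler_wpM2l //; exact: ltW KJ0.
exists (r / 4); first by rewrite divr_gt0.
exists delta => // c hc.
pose Pf t (u : 'rV[R]_m) := c + t *: d + u *m W.
pose Hf t u : 'rV[R]_m := \row_i (if A i then phi i (Pf t u) - phi i c else u ord0 i).
pose Tf t u := u - Hf t u *m Ji.
have K1 t u : 0 <= t <= delta -> `|u| <= beta -> `|Pf t u - x| < r.
  move=> /andP[t0 td] hu.
  have -> : Pf t u - x = (c - x) + t *: d + u *m W.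
    by rewrite /Pf addrAC [c + _ + _]addrAC.
  apply: le_lt_trans (ler_normD _ _) _.
  apply: le_lt_trans (lerD (ler_normD _ _) (HKW u)) _.
  rewrite normrZ ger0_norm //.
  have : t * `|d| <= delta * `|d| by rewrite ler_wpM2r.
  have : KW * `|u| <= KW * beta by rewrite ler_wpM2l // ltW.
  lra.
have HP00 : Pf 0 0 = c by rewrite /Pf scale0r mul0mx !addr0.
have H00 : Hf 0 0 = 0.
  by apply/rowP => i; rewrite !mxE HP00 subrr; case: (A i).
have K3 t t' u : 0 <= t <= delta -> 0 <= t' <= delta -> `|u| <= beta ->
    `|Hf t u - Hf t' u| <= (Gs + e) * `|d| * `|t - t'|.
  move=> ht ht' hu; apply: mxnorm_leP; first by rewrite !mulr_ge0 // ltW.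
  move=> i0 i; rewrite !mxE; case Ai: (A i); last by rewrite subrr normr0 !mulr_ge0 // ltW.
  rewrite opprB addrA subrK.
  apply: le_trans (Kbd _ _ _ Ai (K1 _ _ ht hu) (K1 _ _ ht' hu)) _.
  by rewrite /Pf PdiffE2 normrZ -mulrA [`|d| * _]mulrC.
have TfE t u u' : Tf t u - Tf t u' = ((u - u') *m J - (Hf t u - Hf t u')) *m Ji.
  rewrite mulmxBl -mulmxA mulmxV // mulmx1 /Tf mulmxBl.
  by rewrite !opprD !opprK addrACA.
have K2 t u u' : 0 <= t <= delta -> `|u| <= beta -> `|u'| <= beta ->
    `|Tf t u - Tf t u'| <= 2^-1 * `|u - u'|.
  move=> ht hu hu'; rewrite TfE; apply: le_trans (HKJ _) _.
  have hE : `|(u - u') *m J - (Hf t u - Hf t u')| <= e * (KW * `|u - u'|).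
    apply: mxnorm_leP; first by rewrite !mulr_ge0 // ltW.
    move=> i0 i; rewrite (ord1 i0) mxE [(_ *m J) _ _]mxE.
    case Ai: (A i).
      have -> : \sum_j (u - u') ord0 j * J j i = dotv (g i) ((u - u') *m W).
        by rewrite dotv_mulmx; apply: eq_bigr => j _; rewrite [J _ _]mxE Ai.
      rewrite !mxE Ai.
      have -> : phi i (Pf t u) - phi i c - (phi i (Pf t u') - phi i c) =
        phi i (Pf t u) - phi i (Pf t u') by ring.
      rewrite -(PdiffE c d W t).
      set y := Pf t u; set y' := Pf t u'.
      have -> : dotv (g i) (y - y') - (phi i y - phi i y') =
        - (phi i y - phi i y' - dotv (g i) (y - y')) by ring.
      rewrite normrN; apply: le_trans (Hr1 i Ai y y' _ _) _.
      - exact: lt_le_trans (K1 _ _ ht hu) rr1.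
      - exact: lt_le_trans (K1 _ _ ht hu') rr1.
      apply: ler_wpM2l; first exact: ltW e0.
      by rewrite /y /y' /Pf PdiffE.
    rewrite (bigD1 i) //= big1 => [|j ji]; last by rewrite [J _ _]mxE Ai eq_sym (negbTE ji) mulr0.
    by rewrite [J _ _]mxE Ai eqxx mulr1 addr0 !mxE Ai subrr normr0 !mulr_ge0 // ltW.
  apply: le_trans (_ : KJ * (e * (KW * `|u - u'|)) <= _).
    by rewrite ler_wpM2l // ltW.
  suff -> : KJ * (e * (KW * `|u - u'|)) = 2^-1 * `|u - u'| by [].
  rewrite /e; field; rewrite !gt_eqF //.
have h0d : 0 <= (0 : R) <= delta by rewrite lexx ltW.
have K4 t : 0 <= t <= delta -> `|Tf t 0| <= beta / 2.
  move=> ht; rewrite /Tf sub0r normrN.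
  have -> : Hf t 0 = Hf t 0 - Hf 0 0 by rewrite H00 subr0.
  apply: le_trans (HKJ _) _.
  apply: le_trans dd2; apply: ler_wpM2l; first exact: ltW KJ0.
  apply: le_trans (K3 _ _ _ ht h0d _) _; first by rewrite normr0 ltW.
  rewrite subr0; apply: ler_wpM2l; first by rewrite mulr_ge0 // ltW.
  by case/andP: ht => t0 td; rewrite ger0_norm.
have K5 t u : 0 <= t <= delta -> `|u| <= beta -> `|Tf t u| <= beta.
  move=> ht hu.
  have n0 : `|0 : 'rV[R]_m| <= beta by rewrite normr0 ltW.
  have := K2 t u 0 ht hu n0.
  have := K4 t ht; rewrite subr0.
  have : `|Tf t u| <= `|Tf t u - Tf t 0| + `|Tf t 0|.
    by rewrite -{1}(subrK (Tf t 0) (Tf t u)); apply: ler_normD.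
  lra.
have K6 t : 0 <= t <= delta -> exists2 u, `|u| <= beta & u = Tf t u.
  move=> ht.
  pose U := closed_ball (0 : 'rV[R]_m) beta.
  have UE u : U u <-> `|u| <= beta.
    by rewrite /U closed_ballE //= /closed_ball_ /= sub0r normrN.
  have homo : {homo Tf t : u / U u >-> U u}.
    by move=> u /UE hu; apply/UE; apply: K5.
  have ctr : is_contraction (mkfun homo).
    exists (2^-1)%:nng; split; first by rewrite /= invf_lt1 // ltr1n.
    move=> [a b] [/= /UE Ua /UE Ub]; exact: K2.
  have ne : U !=set0 by exists 0; apply/UE; rewrite normr0 ltW.
  have [u Uu fixu] := @banach_fixed_point R 'rV[R]_m U (mkfun homo) ctr
    (@closed_ball_closed _ _ (0 : 'rV[R]_m) beta) ne.
  by exists u => //; apply/UE.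
have K7 t u : u = Tf t u -> forall i, A i -> phi i (Pf t u) = phi i c.
  move=> fx i Ai.
  have X0 : Hf t u *m Ji = 0.
    have : u - Tf t u = Hf t u *m Ji by rewrite /Tf opprB addrC subrK.
    by rewrite -fx subrr.
  have H0 : Hf t u = 0.
    by rewrite -[Hf t u]mulmx1 -(mulVmx Junit) mulmxA X0 mul0mx.
  have := congr1 (fun M : 'rV[R]_m => M ord0 i) H0; rewrite !mxE Ai.
  by move/eqP; rewrite subr_eq0 => /eqP.
have K8 t t' u u' : 0 <= t <= delta -> 0 <= t' <= delta -> `|u| <= beta -> `|u'| <= beta ->
    u = Tf t u -> u' = Tf t' u' ->
    `|u - u'| <= 2 * (KJ * ((Gs + e) * `|d|)) * `|t - t'|.
  move=> ht ht' hu hu' fx fx'.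
  have E : u - u' = (Tf t u - Tf t u') + (Hf t' u' - Hf t u') *m Ji.
    have -> : (Hf t' u' - Hf t u') *m Ji = Tf t u' - Tf t' u'.
      by rewrite /Tf mulmxBl !opprD !opprK addrACA subrr add0r addrC.
    by rewrite -fx -fx' addrA subrK.
  have h1 := K2 t u u' ht hu hu'.
  have h2 : `|(Hf t' u' - Hf t u') *m Ji| <= KJ * ((Gs + e) * `|d|) * `|t - t'|.
    apply: le_trans (HKJ _) _; rewrite -mulrA; apply: ler_wpM2l; first exact: ltW KJ0.
    by apply: le_trans (K3 _ _ _ ht' ht hu') _; rewrite distrC.
  have h3 : `|u - u'| <= `|Tf t u - Tf t u'| + `|(Hf t' u' - Hf t u') *m Ji|.
    by rewrite E; apply: ler_normD.
  lra.
set Lu := 2 * (KJ * ((Gs + e) * `|d|)).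
have Lu0 : 0 <= Lu by rewrite !mulr_ge0 // ltW.
pose cl t := Num.max 0 (Num.min t delta).
have clin' t : 0 <= cl t <= delta by apply: clin; exact: ltW.
have H6 t : exists u, `|u| <= beta /\ u = Tf (cl t) u.
  by have [u hu fu] := K6 (cl t) (clin' t); exists u.
have [uf Huf] := choice H6.
have T00 : (0 : 'rV[R]_m) = Tf 0 0 by rewrite /Tf H00 mul0mx subr0.
have n0 : `|0 : 'rV[R]_m| <= beta by rewrite normr0 ltW.
exists (fun t => Pf (cl t) (uf t)).
  have cl0 : cl 0 = 0 by apply: clid.
  have [hu fu] := Huf 0; rewrite cl0 in fu.
  have := K8 0 0 (uf 0) 0 h0d h0d hu n0 fu T00.
  rewrite subrr normr0 mulr0 subr0 normr_le0 => /eqP ->.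
  by rewrite cl0.
split.
  exists (`|d| + KW * Lu) => t t'.
  rewrite /Pf PdiffE3.
  have [hu fu] := Huf t; have [hu' fu'] := Huf t'.
  have h8 := K8 _ _ _ _ (clin' t) (clin' t') hu hu' fu fu'.
  have hcl := cllip delta t t'.
  apply: le_trans (ler_normD _ _) _.
  rewrite normrZ.
  have h1 : `|(uf t - uf t') *m W| <= KW * (Lu * `|t - t'|).
    apply: le_trans (HKW _) _; apply: ler_wpM2l; first exact: ltW KW0.
    apply: le_trans h8 _; apply: ler_wpM2l => //.
  have h2 : `|cl t - cl t'| * `|d| <= `|t - t'| * `|d| by apply: ler_wpM2r.
  have -> : (`|d| + KW * Lu) * `|t - t'| = `|t - t'| * `|d| + KW * (Lu * `|t - t'|) by ring.
  exact: lerD.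
move=> t ht; have clt : cl t = t by apply: clid.
have [hu fu] := Huf t; rewrite clt in fu hu; rewrite /= clt.
split.
- exact: lt_le_trans (K1 _ _ ht hu) reps.
- exact: K7 fu.
- by exists (uf t).
Qed.
End Path2.
Section MainAux.
Variable R : realType.

Lemma unit_of_ker m (J : 'M[R]_m) :
  (forall h : 'rV[R]_m, h *m J = 0 -> h = 0) -> J \in unitmx.
Proof.
move=> H; rewrite -row_free_unit -kermx_eq0; apply/eqP/row_matrixP => i.
by rewrite row0; apply: H; rewrite -row_mul mulmx_ker row0.
Qed.

Lemma prod_pos (a b : R) : `|a - b| < `|b| -> 0 < a * b.
Proof.
rewrite ltr_norml => /andP[h1 h2].
case: (ltrgtP b 0) => hb.
- rewrite ltr0_norm // in h1 h2; nra.
- rewrite gtr0_norm // in h1 h2; nra.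
- by rewrite hb normr0 in h1 h2; lra.
Qed.

Lemma sign_agree s (a b : R) : 0 < a * b -> sign_holds s a = sign_holds s b.
Proof.
move=> ab.
have a0 : a != 0 by apply/eqP => a0; rewrite a0 mul0r ltxx in ab.
have b0 : b != 0 by apply/eqP => b0; rewrite b0 mulr0 ltxx in ab.
case: s => /=; last 2 first.
- by apply/idP/idP => h; nra.
- by apply/idP/idP => h; nra.
- by apply/idP/idP => h; nra.
- by apply/idP/idP => h; nra.
- by rewrite (negbTE a0) (negbTE b0).
Qed.

Lemma cevE n (x : 'rV[R]_n) (p : mpoly.mpoly n R) : cev (realC x) p = real_complex R (pev p x).
Proof.
rewrite /cev /pev /meval /mpoly.mmap rmorph_sum; apply: eq_bigr => mm _.
rewrite rmorphM /=; congr (_ * _); rewrite /mpoly.mmap1 rmorph_prod.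
by apply: eq_bigr => i _; rewrite rmorphXn.
Qed.

End MainAux.

Theorem mainTheorem8 (R : realType) (n m : nat)
  (f : 'I_m -> mpoly.mpoly n.+1 R) (sigma : 'I_m -> sign_rel)
  (C : set 'rV[R]_n.+1) :
  is_connected_component (semialg_set f sigma) C ->
  Zset C `<=` [set x | exists S : {set 'I_m},
                  [/\ Eset sigma \subset S, S != finset.set0 & piW f S (realC x)]].
Proof.
move=> [x0 Fx0 ->] x Zx.
set F := semialg_set f sigma.
set Cc := connected_component F x0.
apply: contrapT => Hneg.
pose G i k := pev (mpoly.mderiv k (f i)) x.
pose A : {set 'I_m} := [set i | pev (f i) x == 0]%SET.
have clx : closure Cc x by case: Zx => -[_ [h _]].
have nearc e : 0 < e -> exists2 c, Cc c & `|c - x| < e.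
  move=> e0; have [c [Cc_c bc]] := clx _ (nbhsx_ballx x e e0).
  by exists c => //; move: bc; rewrite -ball_normE /ball_ /= distrC.
have CF : Cc `<=` F by apply: connected_component_sub.
have sgn i : pev (f i) x != 0 -> exists2 r, 0 < r & forall y, `|y - x| < r ->
    0 < pev (f i) y * pev (f i) x.
  move=> nz; have [r r0 L] := SD_lip (SD_poly x (f i)).
  set K := nsum (pgrad (f i) x) + 1 in L.
  have K0 : 0 < K by rewrite ltr_wpDl // nsum_ge0.
  have px0 : 0 < `|pev (f i) x| by rewrite normr_gt0.
  exists (Num.min r (`|pev (f i) x| / K)); first by rewrite lt_min r0 divr_gt0.
  move=> y; rewrite lt_min => /andP[hr hk]; apply: prod_pos.
  have xx : `|x - x| < r by rewrite subrr normr0.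
  apply: le_lt_trans (L _ _ hr xx) _.
  by rewrite mulrC -ltr_pdivlMr.
have EA : Eset sigma \subset A.
  apply/fintype.subsetP => i; rewrite inE; case sg : (sigma i) => // _; rewrite inE.
  apply/negPn/negP => nz; have [r r0 Hr] := sgn i nz; have [c Cc_c hc] := nearc r r0.
  have := CF c Cc_c i; rewrite sg /= => /eqP c0.
  by have := Hr c hc; rewrite /pev c0 mul0r ltxx.
have zeroA i : i \in A -> cev (realC x) (f i) = 0.
  by rewrite cevE inE => /eqP ->; rewrite rmorph0.
have Indep (z : 'I_m -> R) : (forall k : 'I_n.+1, k != ord0 -> \sum_(i in A) z i * G i k = 0) ->
    forall i, i \in A -> z i = 0.
  move=> Hz i0 Ai0; apply: contrapT => /eqP nz.
  apply: Hneg; exists A; split => //; first by apply/set0Pn; exists i0.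
  rewrite /piW; case: ifP => [/cards1P [a Aa] | c1].
    move=> i Ai; split; first exact: zeroA.
    move=> k k0.
    have ia : i = a by move: Ai; rewrite Aa inE => /eqP.
    have i0a : i0 = a by move: Ai0; rewrite Aa inE => /eqP.
    have := Hz k k0; rewrite Aa big_set1 => /eqP; rewrite mulf_eq0 -i0a (negbTE nz) /=.
    move=> /eqP Gz; rewrite ia -i0a cevE; rewrite /G in Gz.
    by rewrite Gz rmorph0.
  case: ifP => [c2|c2].
    split; first exact: zeroA.
    exists (fun i => real_complex R (z i)); split.
      by exists i0 => //; rewrite fmorph_eq0.
    move=> k k0.
    have -> : \sum_(i in A) real_complex R (z i) * cev (realC x) (mpoly.mderiv k (f i))
        = real_complex R (\sum_(i in A) z i * G i k).
      by rewrite rmorph_sum; apply eq_bigr; move=> i _; rewrite rmorphM cevE.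
    by rewrite Hz // rmorph0.
  case: ifP => [c3|c3]; first by move=> i Ai; exact: zeroA.
  have : (0 < #|A|)%N by apply/card_gt0P; exists i0.
  move: c1 c2 c3; set k := #|A| => c1 c2 c3 pos.
  have kn : (k <= n)%N by rewrite leqNgt; apply/negP => h; rewrite h in c3.
  have k2 : (k < 2)%N by rewrite ltnNge; apply/negP => h; move: c2; rewrite h kn.
  have k1 : k = 1%N by apply/eqP; rewrite eqn_leq pos andbT -ltnS.
  by rewrite k1 eqxx in c1.
pose g i := pgrad (f i) x.
have gE i k : g i ord0 k = G i k by rewrite mxE.
pose W : 'M[R]_(m, n.+1) := \matrix_(j, k) (if (j \in A) && (k != ord0) then G j k else 0).
have Junit : \matrix_(j, i) (if i \in A then dotv (g i) (row j W) else (i == j)%:R) \in unitmx.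
  apply: unit_of_ker => h hJ.
  set J := \matrix_(j, i) _ in hJ.
  set v := h *m W.
  have hJi i : (h *m J) ord0 i = if i \in A then dotv (g i) v else h ord0 i.
    rewrite [(h *m J) _ _]mxE; case Ai: (i \in A).
      have -> : \sum_j h ord0 j * J j i = dotv (g i) (h *m W).
        by rewrite dotv_mulmx; apply eq_bigr; move=> j _; rewrite [J _ _]mxE Ai.
      by [].
    rewrite (bigD1 i) //= big1 => [|j ji]; last by rewrite [J _ _]mxE Ai eq_sym (negbTE ji) mulr0.
    by rewrite [J _ _]mxE Ai eqxx mulr1 addr0.
  have hJ0 i : (h *m J) ord0 i = 0 by rewrite hJ mxE.
  have v0 : v ord0 ord0 = 0.
    by rewrite [v _ _]mxE big1 // => j _; rewrite mxE eqxx andbF mulr0.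
  have vk k : k != ord0 -> v ord0 k = \sum_(i in A) h ord0 i * G i k.
    move=> k0; rewrite [v _ _]mxE [RHS]big_mkcond /=; apply eq_bigr; move=> j _.
    by rewrite mxE k0 andbT; case: (j \in A); rewrite ?mulr0.
  have sq : \sum_k v ord0 k * v ord0 k = 0.
    have S0 : \sum_(i in A) h ord0 i * dotv (g i) v = 0.
      by rewrite big1 // => i Ai; have := hJ0 i; rewrite hJi Ai => ->; rewrite mulr0.
    rewrite -[RHS]S0 /dotv.
    under [RHS]eq_bigr do rewrite mulr_sumr.
    rewrite exchange_big /=; apply eq_bigr; move=> k _.
    have [k0|k0] := eqVneq k ord0.
      have vk0 : v ord0 k = 0 by rewrite k0.
      rewrite big1; first by rewrite vk0 mulr0.
      by move=> i _; rewrite vk0 !mulr0.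
    rewrite (vk k k0) mulr_suml; apply eq_bigr; move=> i _; rewrite gE; ring.
  have vz k : v ord0 k = 0.
    have pos : forall k, xpredT k -> 0 <= v ord0 k * v ord0 k by move=> k' _; nra.
    have := @psumr_eq0P _ _ xpredT (fun k => v ord0 k * v ord0 k) pos sq k isT.
    by move/eqP; rewrite mulf_eq0 orbb => /eqP.
  apply/rowP => i; rewrite [RHS]mxE; case Ai: (i \in A).
    apply: (Indep (fun i => h ord0 i)) => // k k0; rewrite -vk //; exact: vz.
  by have := hJ0 i; rewrite hJi Ai.
have [eps0 eps00 Heps] : exists2 e, 0 < e & forall i, i \notin A -> forall y,
    `|y - x| < e -> 0 < pev (f i) y * pev (f i) x.
  apply: fin_min.
    move=> i r r' Hr r'0 r'r Ai y hy; apply: Hr => //; exact: lt_le_trans r'r.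
  move=> i; case Ai: (i \in A); first by exists 1.
  have nz : pev (f i) x != 0 by move: Ai; rewrite inE => /negbT.
  by have [r r0 Hr] := sgn i nz; exists r => // _.
pose e0 : 'rV[R]_n.+1 := \row_k (k == ord0)%:R.
have Key (dir : R) : `|dir| = 1 -> exists y, Cc y /\ 0 < dir * (y ord0 ord0 - x ord0 ord0).
  move=> ndir.
  have [rho rho0 [delta delta0 Hp]] := @path_lemma R n.+1 m x (fun i => pev (f i)) g (fun i => i \in A) W (dir *: e0)
    eps0 eps00 (fun i _ => SD_poly x (f i)) Junit.
  have mpos : 0 < Num.min rho (Num.min delta eps0) by rewrite !lt_min rho0 delta0 eps00.
  have [c Cc_c hc] := nearc _ mpos.
  move: hc; rewrite !lt_min => /andP[hcr /andP[hcd hce]].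
  have [gam g0 [[L HL] Hg]] := Hp c hcr.
  pose K := gam @` `[0, delta]%classic.
  have inK t : `[0, delta]%classic t -> 0 <= t <= delta.
    by rewrite /= in_itv.
  have KF : K `<=` F.
    move=> _ [t /inK ht <-] i.
    have [hx hphi _] := Hg t ht.
    change (sign_holds (sigma i) (pev (f i) (gam t))).
    have Fc : sign_holds (sigma i) (pev (f i) c) by exact: (CF c Cc_c i).
    case Ai: (i \in A).
      by rewrite (hphi i Ai).
    have h1 := Heps i (negbT Ai) _ hx; have h2 := Heps i (negbT Ai) _ hce.
    by rewrite (sign_agree _ h1) -(sign_agree _ h2).
  have Kconn : connected K.
    apply: connected_continuous_connected; first exact: segment_connected.
    exact/continuous_subspaceT/(lip_cont HL).
  have dd : `[0, delta]%classic delta by rewrite /= in_itv /= lexx ltW.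
  have d0 : `[0, delta]%classic 0 by rewrite /= in_itv /= lexx ltW.
  have Kc : K c by exists 0.
  have ccK : connected_component F c (gam delta).
    by apply: (connected_component_max Kc KF Kconn); exists delta.
  exists (gam delta); split; first exact: connected_component_trans Cc_c ccK.
  have [_ _ [u hu]] := Hg delta (inK _ dd).
  have -> : gam delta ord0 ord0 = c ord0 ord0 + delta * dir.
    rewrite hu !mxE eqxx mulr1 big1 ?addr0 // => j _.
    by rewrite mxE eqxx andbF mulr0.
  have hcx : `|c ord0 ord0 - x ord0 ord0| < delta.
    have := mxnorm_entry (c - x) ord0 ord0; rewrite !mxE => h.
    exact: le_lt_trans h hcd.
  have -> : dir * (c ord0 ord0 + delta * dir - x ord0 ord0) =
     dir * (c ord0 ord0 - x ord0 ord0) + delta * (dir * dir) by ring.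
  have dd1 : dir * dir = 1.
    have sq : 0 <= dir * dir by nra.
    by rewrite -(ger0_norm sq) normrM ndir mulr1.
  rewrite dd1 mulr1.
  set a := c ord0 ord0 - x ord0 ord0 in hcx *.
  have h1 : `|dir * a| = `|a| by rewrite normrM ndir mul1r.
  have h2 := ler_norm (- (dir * a)); rewrite normrN in h2.
  lra.
case: Zx => [[hl [_ hinf]] | [hu [_ hsup]]].
  have [y [Cy hy]] := Key (-1) (normrN1 _).
  have := ge_inf hl (ex_intro2 _ _ y Cy erefl).
  rewrite -hinf /pi1; lra.
have [y [Cy hy]] := Key 1 (normr1 _).
have := ub_le_sup hu (ex_intro2 _ _ y Cy erefl).
rewrite -hsup /pi1; lra.
Qed.
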